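(* Let $\mathbf{k}=\mathbb{F}_q$ with $\mathrm{char}\,\mathbf{k}\neq 2$ and let $(Q,\varrho)$ be an $\imath$quiver, i.e. a finite quiver $Q$ (not necessarily acyclic) with an involution $\varrho$. Then $\mathrm{mod}^{\mathrm{nil}}(\Lambda^\imath)$ is equivalent to $\mathcal{C}_\varrho(\mathrm{rep}^{\mathrm{nil}}_{\mathbf{k}}(Q))$.
   Context: $\mathrm{rep}^{\mathrm{nil}}_{\mathbf{k}}(Q)$ is the category of finite-dimensional nilpotent representations of $Q$ over $\mathbf{k}$ (all oriented cycles act nilpotently). An involution $\varrho$ of $Q$ is a quiver automorphism with $\varrho^2=\mathrm{Id}$; it induces an involution $\varrho$ of $\mathrm{rep}^{\mathrm{nil}}_{\mathbf{k}}(Q)$ given by $\varrho(M)_i=M_{\varrho(i)}$, $\varrho(M)_\alpha=M_{\varrho(\alpha)}$. The $\imath$quiver algebra is $\Lambda^\imath=\mathbf{k}\overline{Q}/\overline{I}$, where $\overline{Q}$ is obtained from $Q$ by adding, for each vertex $i$, an arrow $\varepsilon_i:i\to\varrho(i)$ (a loop if $\varrho(i)=i$), and $\overline{I}$ is generated by $\varepsilon_i\varepsilon_{\varrho(i)}$ for all vertices $i$ and by $\varepsilon_i\alpha-\varrho(\alpha)\varepsilon_j$ for every arrow $\alpha:j\to i$ of $Q$. $\mathrm{mod}^{\mathrm{nil}}(\Lambda^\imath)$ is the category of finite-dimensional nilpotent representations of $(\overline{Q},\overline{I})$. For a category $\mathcal{A}$ with involution $\varrho$, $\mathcal{C}_\varrho(\mathcal{A})$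 is the category of pairs $(M,d)$, $M\in\mathcal{A}$, $d:M\to\varrho(M)$ with $\varrho(d)\circ d=0$, with morphisms $f:M\to N$ satisfying $\varrho(f)d=ef$. *)

(* Defs.v *)
From HB Require Import structures.
From mathcomp Require Import all_boot all_order all_algebra.
Set Implicit Arguments. Unset Strict Implicit. Unset Printing Implicit Defensive.
Import GRing.Theory.
Local Open Scope ring_scope.

(* Composition is written diagrammatically: comp f g = "g after f".   *)
Record cat := Cat {
  ob : Type;
  hom : ob -> ob -> Type;
  idm : forall X, hom X X;
  comp : forall X Y Z, hom X Y -> hom Y Z -> hom X Z;
  heq : forall X Y, hom X Y -> hom X Y -> Prop
}.
Arguments idm {c} X.
Arguments comp {c X Y Z} f g.
Arguments heq {c X Y} f g.

Record functor (C D : cat) := Functor {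
  fob : ob C -> ob D;
  fmor : forall X Y, hom X Y -> hom (fob X) (fob Y);
  fmor_heq : forall X Y (f g : hom X Y), heq f g -> heq (fmor f) (fmor g);
  fmor_id : forall X, heq (fmor (idm X)) (idm (fob X));
  fmor_comp : forall X Y Z (f : hom X Y) (g : hom Y Z),
      heq (fmor (comp f g)) (comp (fmor f) (fmor g))
}.
Arguments fob {C D} _ _.
Arguments fmor {C D} _ {X Y} _.

Record natiso (C D : cat) (P P' : ob C -> ob D)
    (Pm : forall X Y, hom X Y -> hom (P X) (P Y))
    (P'm : forall X Y, hom X Y -> hom (P' X) (P' Y)) := NatIso {
  eta : forall X, hom (P X) (P' X);
  etainv : forall X, hom (P' X) (P X);
  eta_inv1 : forall X, heq (comp (eta X) (etainv X)) (idm (P X));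
  eta_inv2 : forall X, heq (comp (etainv X) (eta X)) (idm (P' X));
  eta_nat : forall X Y (f : hom X Y),
      heq (comp (Pm X Y f) (eta Y)) (comp (eta X) (P'm X Y f))
}.

Definition cat_equiv (C D : cat) : Prop :=
  exists (F : functor C D) (G : functor D C),
    inhabited (@natiso C C (fun X => fob G (fob F X)) (fun X => X)
                 (fun X Y f => fmor G (fmor F f)) (fun X Y f => f)) /\
    inhabited (@natiso D D (fun X => fob F (fob G X)) (fun X => X)
                 (fun X Y f => fmor F (fmor G f)) (fun X Y f => f)).

Record quiver := Quiver {
  qV : finType;
  qA : finType;
  qsrc : qA -> qV;
  qtgt : qA -> qV
}.

Record qinvol (Q : quiver) := QInvol {
  rv : qV Q -> qV Q;
  ra : qA Q -> qA Q;
  rvK : involutive rv;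
  raK : involutive ra;
  ra_src : forall a, qsrc (ra a) = rv (qsrc a);
  ra_tgt : forall a, qtgt (ra a) = rv (qtgt a)
}.
Arguments rv {Q} _ _.
Arguments ra {Q} _ _.

(* The quiver Qbar: add an arrow eps_i : i -> rho(i) for each vertex i *)
Definition qbar (Q : quiver) (r : qinvol Q) : quiver :=
  @Quiver (qV Q) (Finite.clone _ (qA Q + qV Q)%type)
    (fun x => match x with inl a => qsrc a | inr i => i end)
    (fun x => match x with inl a => qtgt a | inr i => rv r i end).

(* The space at vertex i is F^(rdim i) (row vectors); the arrow       *)
(* a : i -> j acts by right multiplication by rmat a.                 *)
Section Reps.
Variables (F : fieldType) (Q : quiver).

Record rep := Rep {
  rdim : qV Q -> nat;
  rmat : forall a : qA Q, 'M[F]_(rdim (qsrc a), rdim (qtgt a))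
}.

(* identification of the spaces at i and j when i = j (zero otherwise) *)
Definition trmx (d : qV Q -> nat) (i j : qV Q) : 'M[F]_(d i, d j) :=
  match i =P j with
  | ReflectT e => castmx (erefl (d i), f_equal d e) 1%:M
  | ReflectF _ => 0
  end.

Lemma trmx_nat (d d' : qV Q -> nat) (f : forall i, 'M[F]_(d i, d' i)) i j :
  trmx d i j *m f j = f i *m trmx d' i j.
Proof.
rewrite /trmx; case: eqP => [e|_]; last by rewrite mul0mx mulmx0.
by subst j; rewrite /= !castmx_id mul1mx mulmx1.
Qed.

(* the action of the sequence of arrows p = [a1; ...; an] (a1 applied
   first), as a map from the space at i to the space at j *)
Fixpoint pathmx (M : rep) (i j : qV Q) (p : seq (qA Q)) :
    'M[F]_(rdim M i, rdim M j) :=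
  match p with
  | [::] => trmx (rdim M) i j
  | a :: p' => trmx (rdim M) i (qsrc a) *m rmat M a *m pathmx M (qtgt a) j p'
  end.

Fixpoint is_path (i j : qV Q) (p : seq (qA Q)) : bool :=
  match p with
  | [::] => i == j
  | a :: p' => (qsrc a == i) && is_path (qtgt a) j p'
  end.

Definition rep_nil (M : rep) : Prop :=
  forall (i : qV Q) (p : seq (qA Q)), p != [::] -> is_path i i p ->
    exists n : nat, (pathmx M i i p) ^+ n = 0.

Record rep_hom (M N : rep) := RepHom {
  rmor : forall i, 'M[F]_(rdim M i, rdim N i);
  rmorP : forall a, rmat M a *m rmor (qtgt a) = rmor (qsrc a) *m rmat N a
}.

Definition rep_hom_id (M : rep) : rep_hom M M.
Proof.
exists (fun i => 1%:M) => a; by rewrite mulmx1 mul1mx.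
Defined.

Definition rep_hom_comp (M N P : rep) (f : rep_hom M N) (g : rep_hom N P) :
  rep_hom M P.
Proof.
exists (fun i => rmor f i *m rmor g i) => a.
by rewrite mulmxA rmorP -mulmxA rmorP mulmxA.
Defined.

Definition rep_heq (M N : rep) (f g : rep_hom M N) : Prop :=
  forall i, rmor f i = rmor g i.

End Reps.
Arguments rmat {F Q} _ _.
Arguments rdim {F Q} _ _.
Arguments rmor {F Q M N} _ _.
Arguments trmx {F Q} d i j.
Arguments pathmx {F Q} M i j p.
Arguments is_path {Q} i j p.
Arguments rep_nil {F Q} M.
Arguments rep_hom_id {F Q} M.
Arguments rep_hom_comp {F Q M N P} f g.
Arguments rep_heq {F Q M N} f g.

Definition repnil_ob (F : fieldType) (Q : quiver) :=
  {M : rep F Q | rep_nil M}.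

Definition repnil_cat (F : fieldType) (Q : quiver) : cat :=
  @Cat (repnil_ob F Q)
    (fun X Y => rep_hom (sval X) (sval Y))
    (fun X => rep_hom_id (sval X))
    (fun X Y Z f g => rep_hom_comp f g)
    (fun X Y f g => rep_heq f g).

(* The involution rho on representations: rho(M)_i = M_{rho i},       *)
(* rho(M)_a = M_{rho a};  rho(f)_i = f_{rho i}.                        *)
Section Rho.
Variables (F : fieldType) (Q : quiver) (r : qinvol Q).

Definition rho_rep (M : rep F Q) : rep F Q :=
  @Rep F Q (fun i => rdim M (rv r i))
    (fun a => trmx (fun i => rdim M i) (rv r (qsrc a)) (qsrc (ra r a))
              *m rmat M (ra r a)
              *m trmx (fun i => rdim M i) (qtgt (ra r a)) (rv r (qtgt a))).

Definition rho_hom (M N : rep F Q) (f : rep_hom M N) :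
  rep_hom (rho_rep M) (rho_rep N).
Proof.
exists (fun i => rmor f (rv r i)) => a /=.
rewrite -!mulmxA (trmx_nat (fun i => rmor f i)) !mulmxA; congr (_ *m _).
by rewrite -!mulmxA rmorP !mulmxA (trmx_nat (fun i => rmor f i)).
Defined.

(* objects of C_rho(rep^nil(Q)): pairs (M, d), d : M -> rho(M),
   rho(d) o d = 0 *)
Record Cobj := CObj {
  cM : rep F Q;
  cM_nil : rep_nil cM;
  cd : rep_hom cM (rho_rep cM);
  cd_sq : forall i, rmor cd i *m rmor (rho_hom cd) i = 0
}.

Record Chom (X Y : Cobj) := CHom {
  cf : rep_hom (cM X) (cM Y);
  cfP : forall i, rmor (cd X) i *m rmor (rho_hom cf) i
                  = rmor cf i *m rmor (cd Y) i
}.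

Definition Chom_id (X : Cobj) : Chom X X.
Proof.
exists (rep_hom_id (cM X)) => i /=; by rewrite mulmx1 mul1mx.
Defined.

Definition Chom_comp (X Y Z : Cobj) (f : Chom X Y) (g : Chom Y Z) : Chom X Z.
Proof.
exists (rep_hom_comp (cf f) (cf g)) => i /=.
have := cfP f i; have := cfP g i; rewrite /= => Hg Hf.
by rewrite mulmxA Hf -mulmxA Hg mulmxA.
Defined.

Definition Crho_cat : cat :=
  @Cat Cobj Chom Chom_id (fun X Y Z f g => Chom_comp f g)
    (fun X Y f g => rep_heq (cf f) (cf g)).

(* mod^nil(Lambda^i): nilpotent representations of Qbar satisfying    *)
(* the relations of Ibar:                                             *)
(*   eps_i eps_{rho i} = 0  (path [eps_{rho i}; eps_i] from rho i)     *)
(*   eps_i alpha = rho(alpha) eps_j  for alpha : j -> i                *)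
Definition ibar_rel (N : rep F (qbar r)) : Prop :=
  (forall i : qV Q,
     @pathmx F (qbar r) N (rv r i) (rv r i) [:: inr (rv r i); inr i] = 0) /\
  (forall a : qA Q,
     @pathmx F (qbar r) N (qsrc a) (rv r (qtgt a)) [:: inl a; inr (qtgt a)] =
     @pathmx F (qbar r) N (qsrc a) (rv r (qtgt a)) [:: inr (qsrc a); inl (ra r a)]).

Definition modnil_ob := {N : rep F (qbar r) | rep_nil N /\ ibar_rel N}.

Definition modnil_cat : cat :=
  @Cat modnil_ob
    (fun X Y => rep_hom (sval X) (sval Y))
    (fun X => rep_hom_id (sval X))
    (fun X Y Z f g => rep_hom_comp f g)
    (fun X Y f g => rep_heq f g).

End Rho.

(* Main.v *)
Require Import Defs.
From HB Require Import structures.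
From mathcomp Require Import all_boot all_order all_algebra all_field.
Set Implicit Arguments. Unset Strict Implicit. Unset Printing Implicit Defensive.
Import GRing.Theory.
Local Open Scope ring_scope.

Section S.
Variables (F : fieldType) (Q : quiver) (r : qinvol Q).

Lemma trmx_id (Q' : quiver) (d : qV Q' -> nat) i : @Defs.trmx F Q' d i i = 1%:M.
Proof.
rewrite /Defs.trmx; case: (i =P i) => // e.
by rewrite (eq_irrelevance e (erefl i)) castmx_id.
Qed.

Definition qbar_mat (M : rep F Q) (d : rep_hom M (rho_rep r M)) :
  forall x : qA (qbar r), 'M[F]_(rdim M (@qsrc (qbar r) x), rdim M (@qtgt (qbar r) x)) :=
  fun x => match x with inl a => rmat M a | inr i => rmor d i end.

Definition qbar_rep (M : rep F Q) (d : rep_hom M (rho_rep r M)) : rep F (qbar r) :=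
  @Rep F (qbar r) (rdim M) (qbar_mat d).

Definition res_rep (N : rep F (qbar r)) : rep F Q :=
  @Rep F Q (rdim N) (fun a => rmat N (inl a)).

Definition res_d (N : rep F (qbar r)) (H : ibar_rel N) : rep_hom (res_rep N) (rho_rep r (res_rep N)).
Proof.
exists (fun i => rmat N (inr i)) => a /=.
case: H => _ /(_ a) /=. rewrite !trmx_id !mulmx1 !mul1mx => ->.
by rewrite !mulmxA.
Defined.

Lemma trmx_comp (Q' : quiver) (d : qV Q' -> nat) a b c : a = b ->
  @Defs.trmx F Q' d a b *m @Defs.trmx F Q' d b c = @Defs.trmx F Q' d a c.
Proof. by move=> <-; rewrite trmx_id mul1mx. Qed.

Lemma trmx_rv (d : qV Q -> nat) a b :
  @Defs.trmx F (qbar r) (fun j => d (rv r j)) a b = @Defs.trmx F Q d (rv r a) (rv r b).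
Proof.
rewrite /Defs.trmx; case: (a =P b) => [e|ne]; case: (rv r a =P rv r b) => [e'|ne'].
- by subst b; rewrite (eq_irrelevance e' (erefl _)).
- by subst b; case: ne'.
- by case: ne; rewrite -(rvK r a) e' rvK.
- by [].
Qed.

Lemma res_sq (N : rep F (qbar r)) (H : ibar_rel N) i :
  rmor (res_d H) i *m rmor (rho_hom r (res_d H)) i = 0.
Proof.
rewrite /=; case: H => H1 _; have := H1 (rv r i).
rewrite /= !trmx_id !mul1mx !mulmx1 => H.
have := congr1 (mulmx (@Defs.trmx F (qbar r) (rdim N) i (rv r (rv r i)))) H.
rewrite mulmx0 !mulmxA.
rewrite (@trmx_nat F (qbar r) (rdim N) (fun j => rdim N (rv r j)) (fun j => rmat N (inr j))) trmx_rv.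
rewrite -!mulmxA (mulmxA (Defs.trmx _ _ _)).
by rewrite (@trmx_comp Q (rdim N) (rv r i) (rv r (rv r (rv r i))) (rv r i) (esym (rvK r (rv r i)))) trmx_id mul1mx.
Qed.

Definition linl (p : seq (qA Q)) : seq (qA (qbar r)) :=
  map (fun a => (inl a : qA (qbar r))) p.

Lemma pathmx_res (N : rep F (qbar r)) i j p :
  pathmx (res_rep N) i j p = pathmx N i j (linl p).
Proof. by elim: p i => [|a p IH] i //=; rewrite IH. Qed.

Lemma is_path_res i j (p : seq (qA Q)) :
  @is_path (qbar r) i j (linl p) = @is_path Q i j p.
Proof. by elim: p i => [|a p IH] i //=; rewrite IH. Qed.

Lemma res_nil (N : rep F (qbar r)) : rep_nil N -> rep_nil (res_rep N).
Proof.
move=> Hn i p pn0 ip; rewrite pathmx_res; apply: Hn.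
  by case: p pn0 {ip}.
by rewrite is_path_res.
Qed.

Definition res_ob (X : modnil_ob F r) : Cobj F r :=
  @CObj F Q r (res_rep (sval X)) (res_nil (proj1 (svalP X)))
    (res_d (proj2 (svalP X))) (res_sq (proj2 (svalP X))).

Definition res_rhom (N N' : rep F (qbar r)) (f : rep_hom N N') :
  rep_hom (res_rep N) (res_rep N').
Proof. refine (@RepHom F Q (res_rep N) (res_rep N') (fun i => rmor f i) _) => a; exact: (rmorP f (inl a)). Defined.

Definition res_hom (X Y : modnil_ob F r) (f : rep_hom (sval X) (sval Y)) :
  Chom (res_ob X) (res_ob Y).
Proof. exists (res_rhom f) => i; exact: (rmorP f (inr i)). Defined.

Definition ResF : functor (modnil_cat F r) (Crho_cat F r).
Proof.
refine (@Functor (modnil_cat F r) (Crho_cat F r) res_ob res_hom _ _ _).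
- by move=> X Y f g H i; exact: H i.
- by [].
- by [].
Defined.

Section Q.
Variable X : Cobj F r.
Let M := cM X.
Let d := cd X.
Let N := qbar_rep d.

Definition has_eps (p : seq (qA (qbar r))) :=
  has (fun x : qA (qbar r) => if x is inr _ then true else false) p.

Lemma Kt m i k (V : 'M[F]_(m, rdim M i)) : V *m rmor d i = 0 ->
  V *m @Defs.trmx F (qbar r) (rdim M) i k *m rmor d k = 0.
Proof.
move=> H.
by rewrite -mulmxA (@trmx_nat F (qbar r) _ (fun i => rdim M (rv r i)) (fun i => rmor d i)) mulmxA H mul0mx.
Qed.

Lemma Kstep m i (x : qA (qbar r)) (V : 'M[F]_(m, rdim M i)) : V *m rmor d i = 0 ->
  V *m @Defs.trmx F (qbar r) (rdim M) i (@qsrc (qbar r) x) *m rmat N x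
    *m rmor d (@qtgt (qbar r) x) = 0.
Proof.
move=> /(Kt (@qsrc (qbar r) x)); case: x => [a|l] /= H.
  by rewrite -mulmxA (rmorP d a) mulmxA H mul0mx.
by rewrite -mulmxA (cd_sq X l) mulmx0.
Qed.

Lemma LA m i j p (V : 'M[F]_(m, rdim M i)) : V *m rmor d i = 0 ->
  V *m pathmx N i j p *m rmor d j = 0.
Proof.
elim: p i V => [|x p IH] i V H /=; first exact: Kt.
by rewrite !mulmxA; apply: IH; apply: Kstep.
Qed.

Lemma LB m i j p (V : 'M[F]_(m, rdim M i)) : has_eps p -> V *m rmor d i = 0 ->
  V *m pathmx N i j p = 0.
Proof.
elim: p i V => [|x p IH] i V //= he H.
rewrite !mulmxA; case: x he => [a|l] /= he.
  by apply: IH => //; apply: (Kstep (inl a)).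
by have := Kt l H => /= ->; rewrite mul0mx.
Qed.

Lemma LC i j p : has_eps p -> pathmx N i j p *m rmor d j = 0.
Proof.
elim: p i => [|x p IH] i //=; case: x => [a|l] /= he.
  by rewrite -mulmxA IH // mulmx0.
apply: LA; rewrite -mulmxA; have := cd_sq X l; rewrite /= => ->; by rewrite mulmx0.
Qed.

Lemma noeps p : ~~ has_eps p -> exists q, p = linl q.
Proof.
elim: p => [|x p IH] /=; first by exists [::].
case: x => [a|l] //= /IH [q ->]; by exists (a :: q).
Qed.

Lemma pathmx_map i j q : pathmx N i j (linl q) = pathmx M i j q.
Proof. by elim: q i => [|a q IH] i //=; rewrite IH. Qed.

Lemma qbar_nil : rep_nil N.
Proof.
move=> i p pn0 ip; case: (boolP (has_eps p)) => he.
  exists 2%N; rewrite expr2 -mulmxE; apply: LB => //; exact: LC.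
have [q eq] := noeps he; subst p.
rewrite pathmx_map; apply: (cM_nil X); first by case: q pn0 {ip he}.
by rewrite -is_path_res.
Qed.

Lemma qbar_ibar : ibar_rel N.
Proof.
split=> [i|a] /=.
  rewrite !trmx_id !mul1mx !mulmx1.
  rewrite (@trmx_nat F _ _ (fun i => rdim M (rv r i)) (fun i => rmor d i)).
  by rewrite mulmxA (cd_sq X (rv r i)) mul0mx.
rewrite !trmx_id !mul1mx !mulmx1 (rmorP d a) /=.
by rewrite !mulmxA.
Qed.
End Q.

Definition qbar_ob (X : Cobj F r) : modnil_ob F r :=
  exist _ (qbar_rep (cd X)) (conj (qbar_nil X) (qbar_ibar X)).

Definition qbar_hom (X Y : Cobj F r) (f : Chom X Y) :
  rep_hom (qbar_rep (cd X)) (qbar_rep (cd Y)).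
Proof.
refine (@RepHom F (qbar r) (qbar_rep (cd X)) (qbar_rep (cd Y)) (fun i => rmor (cf f) i) _).
case=> [a|i] /=; first exact: (rmorP (cf f) a).
exact: (cfP f i).
Defined.

Definition QbarF : functor (Crho_cat F r) (modnil_cat F r).
Proof.
refine (@Functor (Crho_cat F r) (modnil_cat F r) qbar_ob qbar_hom _ _ _).
- by move=> X Y f g H i; exact: H i.
- by [].
- by [].
Defined.

Definition etaM (X : modnil_ob F r) : rep_hom (sval (qbar_ob (res_ob X))) (sval X).
Proof.
refine (@RepHom F (qbar r) (sval (qbar_ob (res_ob X))) (sval X) (fun i => 1%:M) _).
by case=> [a|i] /=; rewrite mulmx1 mul1mx.
Defined.

Definition etaMi (X : modnil_ob F r) : rep_hom (sval X) (sval (qbar_ob (res_ob X))).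
Proof.
refine (@RepHom F (qbar r) (sval X) (sval (qbar_ob (res_ob X))) (fun i => 1%:M) _).
by case=> [a|i] /=; rewrite mulmx1 mul1mx.
Defined.

Definition etaC (X : Cobj F r) : Chom (res_ob (qbar_ob X)) X.
Proof.
unshelve refine (@CHom F Q r _ _ (@RepHom F Q (cM (res_ob (qbar_ob X))) (cM X) (fun i => 1%:M) _) _).
all: by move=> ? /=; rewrite ?mulmx1 ?mul1mx.
Defined.

Definition etaCi (X : Cobj F r) : Chom X (res_ob (qbar_ob X)).
Proof.
unshelve refine (@CHom F Q r _ _ (@RepHom F Q (cM X) (cM (res_ob (qbar_ob X))) (fun i => 1%:M) _) _).
all: by move=> ? /=; rewrite ?mulmx1 ?mul1mx.
Defined.

Lemma main_equiv : cat_equiv (modnil_cat F r) (Crho_cat F r).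
Proof.
exists ResF, QbarF; split; constructor.
- refine (@NatIso (modnil_cat F r) (modnil_cat F r) _ _ _ _ etaM etaMi _ _ _).
  + by move=> X i /=; rewrite mulmx1.
  + by move=> X i /=; rewrite mulmx1.
  + by move=> X Y f i /=; rewrite mulmx1 mul1mx.
- refine (@NatIso (Crho_cat F r) (Crho_cat F r) _ _ _ _ etaC etaCi _ _ _).
  + by move=> X i /=; rewrite mulmx1.
  + by move=> X i /=; rewrite mulmx1.
  + by move=> X Y f i /=; rewrite mulmx1 mul1mx.
Qed.
End S.

Theorem lemma2p4 (F : finFieldType) (hF : (2%N \notin [pchar F])%R)
  (Q : quiver) (r : qinvol Q) :
  cat_equiv (modnil_cat F r) (Crho_cat F r).
Proof. exact: main_equiv. Qed.
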